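(* For any grid $\mathcal G$ and any $\delta<c(\mathcal G)/2$, if $M$ is a finitely presented $n$-parameter persistence module then $d_I(\mathsf M^{\mathcal G}_\delta(M),M)\leq\delta$.
   Context: Modules are $\mathbb{R}^n$-graded modules over $P_n$ (monoid ring over a field of $([0,\infty)^n,+)$). A grid is $\mathcal G=\prod_i\mathcal G^i$, $\mathcal G^i:[k_i]\to\mathbb{R}$, with controlling constant $c(\mathcal G)=\min\{\|\vec a-\vec b\|_\infty:\vec a\ne\vec b\in\mathrm{Im}\,\mathcal G\}$. The merge function $\mathsf M^{\mathcal G}_\delta:\mathbb{R}^n\to\mathbb{R}^n$ acts coordinatewise by sending $x$ to $\mathcal G^i(k)$ if $x\in[\mathcal G^i(k)-\delta,\mathcal G^i(k)+\delta]$, else fixing $x$. Given a presentation $F_1\xrightarrow{p_1}F_0\to M$ with $F_0,F_1$ finitely generated free, $\mathsf M^{\mathcal G}_\delta(M)$ is the cokernel of the map obtained by replacing every generator grade $\vec g$ by $\mathsf M^{\mathcal G}_\delta(\vec g)$ and every monomial $\vec x^{\vec r-\vec b}$ in $p_1$ by $\vec x^{\mathsf M(\vec r)-\mathsf M(\vec b)}$. $d_I$ is the interleaving distance: $M,N$ are $\varepsilon$-interleaved if there are natural maps $M_{\vec a}\to N_{\vec a+\varepsilon\vec1}$, $N_{\vec a}\to M_{\vec a+\varepsilon\vec1}$ whose composites are the internal maps shifting by $2\varepsilon\vec1$; $d_I$ is the infimum of such $\varepsilon$. *)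

(* Defs.v *)
From HB Require Import structures.
From mathcomp Require Import all_boot all_order all_algebra.
From mathcomp Require Import classical_sets reals constructive_ereal ereal.
Set Implicit Arguments.
Unset Strict Implicit.
Unset Printing Implicit Defensive.
Import Order.TTheory GRing.Theory Num.Theory.
Local Open Scope ring_scope.

Section PersistenceDefs.
Variables (K : fieldType) (R : realType) (n : nat).

Definition lev (a b : 'rV[R]_n) : bool := [forall i, a ord0 i <= b ord0 i].
Definition shift (a : 'rV[R]_n) (eps : R) : 'rV[R]_n := a + const_mx eps.
Definition norminf (a : 'rV[R]_n) : R := \big[Num.max/0]_(i < n) `|a ord0 i|.

(* A pointwise finite-dimensional R^n-persistence module over K:
   M_a = K^(pdim a), and pmap a b is the structure map M_a -> M_b for a <= b
   (matrices act on row vectors: v |-> v *m pmap a b).  The values of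
   pmap a b for a not <= b are irrelevant. *)
Record pmod := PMod {
  pdim : 'rV[R]_n -> nat;
  pmap : forall a b : 'rV[R]_n, 'M[K]_(pdim a, pdim b) }.
Arguments pmap : clear implicits.

(* functoriality (not needed by the statement, recorded for documentation) *)
Definition is_pmod (M : pmod) : Prop :=
  (forall a, pmap M a a = 1%:M) /\
  (forall a b c, lev a b -> lev b c -> pmap M a b *m pmap M b c = pmap M a c).

Definition interleaved (M N : pmod) (eps : R) : Prop :=
  exists (phi : forall a, 'M[K]_(pdim M a, pdim N (shift a eps)))
         (psi : forall a, 'M[K]_(pdim N a, pdim M (shift a eps))),
    [/\ forall a b, lev a b ->
          pmap M a b *m phi b = phi a *m pmap N (shift a eps) (shift b eps),
        forall a b, lev a b ->
          pmap N a b *m psi b = psi a *m pmap M (shift a eps) (shift b eps),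
        forall a, phi a *m psi (shift a eps) = pmap M a (shift (shift a eps) eps)
      & forall a, psi a *m phi (shift a eps) = pmap N a (shift (shift a eps) eps)].

(* interleaving distance, in the extended reals (+oo if never interleaved) *)
Definition dI (M N : pmod) : \bar R :=
  ereal_inf [set (e%:E)%E | e in [set e : R | 0 <= e /\ interleaved M N e]].

(* A presentation F_1 --p_1--> F_0 with F_0 = (+)_{i<m} P_n(-gen i),
   F_1 = (+)_{j<l} P_n(-rel j).  Row j of [mat] holds the coefficients c_{j i}
   of p_1(e_j) = sum_i c_{j i} x^(rel j - gen i) e_i. *)
Record pres := Pres {
  pm : nat; pl : nat;
  pgen : 'I_pm -> 'rV[R]_n;
  prel : 'I_pl -> 'rV[R]_n;
  pmat : 'M[K]_(pl, pm) }.
Arguments pgen : clear implicits.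
Arguments prel : clear implicits.
Arguments pmat : clear implicits.

(* p_1 is a well-defined graded map: monomials x^(rel j - gen i) exist *)
Definition valid_pres (P : pres) : Prop :=
  forall j i, pmat P j i != 0 -> lev (pgen P i) (prel P j).

(* the cokernel module of a presentation, as a subquotient of K^m:
   (F_0)_a = span of e_i with gen i <= a,  im(p_1)_a = span of rows j with rel j <= a *)
Definition pres_F0 (P : pres) (a : 'rV[R]_n) : 'M[K]_(pm P) :=
  diag_mx (\row_i (lev (pgen P i) a)%:R).
Definition pres_Im (P : pres) (a : 'rV[R]_n) : 'M[K]_(pl P, pm P) :=
  \matrix_(j, i) (if lev (prel P j) a then pmat P j i else 0).
(* a complement of im(p_1)_a in (F_0)_a, representing the quotient *)
Definition pres_C (P : pres) a : 'M[K]_(pm P) := (pres_F0 P a :\: pres_Im P a)%MS.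
Definition pres_dim (P : pres) a : nat := \rank (pres_C P a).
Definition pres_map (P : pres) a b : 'M[K]_(pres_dim P a, pres_dim P b) :=
  row_base (pres_C P a) *m proj_mx (pres_C P b) (<<pres_Im P b>>%MS)
    *m pinvmx (row_base (pres_C P b)).
Definition coker (P : pres) : pmod := @PMod (pres_dim P) (pres_map P).

(* grids G = prod_i G^i, G^i : [k_i] -> R *)
Record grid := Grid { gk : 'I_n -> nat; gval : forall i : 'I_n, 'I_(gk i) -> R }.
Arguments gval : clear implicits.

Definition grid_pt (G : grid) (t : forall i : 'I_n, 'I_(gk G i)) : 'rV[R]_n :=
  \row_i gval G i (t i).
Arguments grid_pt : clear implicits.

(* delta < c(G)/2, where c(G) = min of sup-distances between distinct points
   of Im G (written out; vacuous when Im G has < 2 points, i.e. c(G) = +oo) *)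
Definition lt_half_c (G : grid) (delta : R) : Prop :=
  forall s t : (forall i : 'I_n, 'I_(gk G i)), grid_pt G s != grid_pt G t ->
    delta < norminf (grid_pt G s - grid_pt G t) / 2.

Definition merge1 (G : grid) (delta : R) (i : 'I_n) (x : R) : R :=
  match [pick k | `|x - gval G i k| <= delta] with
  | Some k => gval G i k
  | None => x
  end.
Definition merge (G : grid) (delta : R) (a : 'rV[R]_n) : 'rV[R]_n :=
  \row_i merge1 G delta i (a ord0 i).

(* merged presentation: grades replaced by merged grades, coefficients kept
   (monomials x^(r-b) become x^(M(r)-M(b))) *)
Definition merge_pres (G : grid) (delta : R) (P : pres) : pres :=
  @Pres (pm P) (pl P) (fun i => merge G delta (pgen P i))
        (fun j => merge G delta (prel P j)) (pmat P).

End PersistenceDefs.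

(* Main.v *)
Require Import Defs.
From mathcomp Require Import all_boot all_order all_algebra.
From mathcomp Require Import classical_sets reals constructive_ereal ereal.
From mathcomp Require Import lra.
Set Implicit Arguments. Unset Strict Implicit. Unset Printing Implicit Defensive.
Import Order.TTheory GRing.Theory Num.Theory.
Local Open Scope ring_scope.


Definition sqmap (K : fieldType) m pa pb (Fa : 'M[K]_m) (Ia : 'M_(pa, m)) (Fb : 'M_m) (Ib : 'M_(pb, m))
  : 'M_(\rank (Fa :\: Ia)%MS, \rank (Fb :\: Ib)%MS) :=
  row_base (Fa :\: Ia)%MS *m proj_mx (Fb :\: Ib)%MS (<<Ib>>%MS) *m pinvmx (row_base (Fb :\: Ib)%MS).

Lemma sqmap_comp (K : fieldType) m pa pb pc (Fa : 'M[K]_m) (Ia : 'M_(pa, m)) Fb (Ib : 'M_(pb, m)) Fc (Ic : 'M_(pc,m)) :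
  (Fa <= Fb)%MS -> (Ib <= Fb)%MS -> (Ib <= Ic)%MS ->
  sqmap Fa Ia Fb Ib *m sqmap Fb Ib Fc Ic = sqmap Fa Ia Fc Ic.
Proof.
move=> sab sIb sbc; rewrite /sqmap.
set X := row_base (Fa :\: Ia)%MS *m proj_mx (Fb :\: Ib)%MS <<Ib>>%MS.
have H : X *m pinvmx (row_base (Fb :\: Ib)%MS) *m row_base (Fb :\: Ib)%MS = X.
  by rewrite mulmxKpV // eq_row_base proj_mx_sub.
rewrite (mulmxA (X *m _)) (mulmxA (X *m _)) H.
congr (_ *m _).
have sXa : (row_base (Fa :\: Ia)%MS <= (Fb :\: Ib)%MS + <<Ib>>%MS)%MS.
  rewrite eq_row_base (submx_trans (diffmxSl _ _)) // (submx_trans sab) //.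
  rewrite -{1}(addsmx_diff_cap_eq Fb Ib) addsmxS //.
  by rewrite ((genmxE Ib).2 _ (Fb :&: Ib)%MS).2 capmxSr.
have := proj_mx_compl_sub sXa; rewrite -/X => sY.
have -> : X = row_base (Fa :\: Ia)%MS - (row_base (Fa :\: Ia)%MS - X) by rewrite opprB addrC subrK.
rewrite /X mulmxBl (@proj_mx_0 _ _ _ _ _ (row_base (Fa :\: Ia)%MS - X)) ?subr0 //.
  apply/eqP; rewrite -submx0 -(capmx_diff Fc Ic) capmxS //.
  by rewrite ((genmxE Ic).2 _ Ic).1 submx_refl.
by rewrite genmxE (submx_trans sY) // genmxE.
Qed.

Lemma ohead_filter_eq (T : eqType) (P Q : pred T) (s : seq T) k k' :
  ohead (seq.filter P s) = Some k -> ohead (seq.filter Q s) = Some k' ->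
  P k' -> Q k -> k = k'.
Proof.
elim: s => //= x s IH.
case Px: (P x); case Qx: (Q x) => /=.
- by move=> [<-] [<-].
- move=> [<-] Hq Pk' Qk; by rewrite Qx in Qk.
- move=> Hp [<-] Pk' Qk; by rewrite Px in Pk'.
- exact: IH.
Qed.

Lemma pick_eq (T : finType) (P Q : pred T) k k' :
  pick P = Some k -> pick Q = Some k' -> P k' -> Q k -> k = k'.
Proof.
rewrite /pick /enum_mem => HP HQ Pk' Qk.
apply: (ohead_filter_eq HP HQ) => //.
Qed.

Section Merge.
Variables (R : realType) (n : nat) (G : grid R n) (delta : R).

Hypothesis d0 : 0 <= delta.

Lemma merge1_near i x : `|merge1 G delta i x - x| <= delta.
Proof.
rewrite /merge1; case: pickP => [k Pk|_].
  by rewrite distrC.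
by rewrite subrr normr0.
Qed.

Lemma merge1_mono i x y : x <= y -> merge1 G delta i x <= merge1 G delta i y.
Proof.
move=> xy; rewrite /merge1.
case Ex: [pick k | `|x - @gval _ _ G i k| <= delta] => [k|];
case Ey: [pick k | `|y - @gval _ _ G i k| <= delta] => [k'|].
- have Pk : `|x - @gval _ _ G i k| <= delta by move: Ex; case: pickP => // k0 H [<-].
  have Pk' : `|y - @gval _ _ G i k'| <= delta by move: Ey; case: pickP => // k0 H [<-].
  rewrite leNgt; apply/negP => lt.
  move: Pk Pk'; rewrite !ler_distlC => /andP[h1 h2] /andP[h3 h4].
  have e := pick_eq Ex Ey.
  have : k = k'.
    apply: e => /=; rewrite ler_distlC; apply/andP; split; lra.
  by move=> kk; rewrite kk ltxx in lt.
- have Pk : `|x - @gval _ _ G i k| <= delta by move: Ex; case: pickP => // k0 H [<-].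
  move: Ey; case: pickP => [k0 _ //|ny _].
  rewrite leNgt; apply/negP => lt.
  have := ny k => /=; rewrite ler_distlC.
  move: Pk; rewrite ler_distlC => /andP[h1 h2].
  suff -> : (y - delta <= @gval _ _ G i k <= y + delta) by [].
  apply/andP; split; lra.
- have Pk' : `|y - @gval _ _ G i k'| <= delta by move: Ey; case: pickP => // k0 H [<-].
  move: Ex; case: pickP => [k0 _ //|nx _].
  rewrite leNgt; apply/negP => lt.
  have := nx k' => /=; rewrite ler_distlC.
  move: Pk'; rewrite ler_distlC => /andP[h1 h2].
  suff -> : (x - delta <= @gval _ _ G i k' <= x + delta) by [].
  apply/andP; split; lra.
- by [].
Qed.

End Merge.

Section Lev.
Variables (R : realType) (n : nat).
Implicit Types a b c : 'rV[R]_n.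

Lemma lev_trans a b c : lev a b -> lev b c -> lev a c.
Proof.
move=> /forallP h1 /forallP h2; apply/forallP => i; exact: le_trans (h1 i) (h2 i).
Qed.

Lemma shiftE a e i : shift a e ord0 i = a ord0 i + e.
Proof. by rewrite /shift !mxE. Qed.

Variables (G : grid R n) (delta : R).
Hypothesis d0 : 0 <= delta.

Lemma mergeE a i : Defs.merge G delta a ord0 i = merge1 G delta i (a ord0 i).
Proof. by rewrite /merge mxE. Qed.

Lemma merge_lev1 x a : lev (Defs.merge G delta x) a -> lev x (shift a delta).
Proof.
move=> /forallP h; apply/forallP => i; rewrite shiftE.
have := h i; rewrite mergeE; have := merge1_near G d0 i (x ord0 i).
rewrite ler_distlC => /andP[h1 h2] h3; lra.
Qed.

Lemma merge_lev2 x a : lev x a -> lev (Defs.merge G delta x) (shift a delta).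
Proof.
move=> /forallP h; apply/forallP => i; rewrite shiftE mergeE.
have := h i; have := merge1_near G d0 i (x ord0 i).
rewrite ler_distlC => /andP[h1 h2] h3; lra.
Qed.

Lemma merge_mono x y : lev x y -> lev (Defs.merge G delta x) (Defs.merge G delta y).
Proof.
move=> /forallP h; apply/forallP => i; rewrite !mergeE.
exact: merge1_mono.
Qed.
End Lev.

Section Mats.
Variables (K : fieldType) (R : realType) (n : nat).

Definition F0g m (g : 'I_m -> 'rV[R]_n) a : 'M[K]_m := diag_mx (\row_i (lev (g i) a)%:R).
Definition Img l m (r : 'I_l -> 'rV[R]_n) (A : 'M[K]_(l,m)) a : 'M_(l,m) :=
  \matrix_(j,i) (if lev (r j) a then A j i else 0).

Lemma F0g_sub m (g g' : 'I_m -> 'rV[R]_n) a b :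
  (forall i, lev (g i) a -> lev (g' i) b) -> (F0g g a <= F0g g' b)%MS.
Proof.
move=> H.
have -> : F0g g a = F0g g a *m F0g g' b.
  apply/matrixP => i j; rewrite mul_diag_mx !mxE.
  case: (boolP (lev (g i) a)) => h; first by rewrite (H i h) /= mul1r.
  by rewrite /= mul0r mul0rn.
exact: submxMl.
Qed.

Lemma Img_sub l m (r r' : 'I_l -> 'rV[R]_n) (A : 'M[K]_(l,m)) a b :
  (forall j, lev (r j) a -> lev (r' j) b) -> (Img r A a <= Img r' A b)%MS.
Proof.
move=> H.
have -> : Img r A a = diag_mx (\row_j (lev (r j) a)%:R) *m Img r' A b.
  apply/matrixP => j i; rewrite mul_diag_mx !mxE.
  case: (boolP (lev (r j) a)) => h; first by rewrite (H j h) /= mul1r.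
  by rewrite /= mul0r.
exact: submxMl.
Qed.

Lemma Img_F0 l m (r : 'I_l -> 'rV[R]_n) (g : 'I_m -> 'rV[R]_n) (A : 'M[K]_(l,m)) a :
  (forall j i, A j i != 0 -> lev (g i) (r j)) -> (Img r A a <= F0g g a)%MS.
Proof.
move=> H.
have -> : Img r A a = Img r A a *m F0g g a.
  apply/matrixP => j i; rewrite mul_mx_diag !mxE.
  case: (boolP (lev (r j) a)) => h; last by rewrite mul0r.
  case: (eqVneq (A j i) 0) => [->|nz]; first by rewrite mul0r.
  by rewrite (lev_trans (H j i nz) h) mulr1.
exact: submxMl.
Qed.
End Mats.

Lemma lev_shift (R : realType) (n : nat) (a b : 'rV[R]_n) e : lev a b -> lev (shift a e) (shift b e).
Proof.
move=> /forallP h; apply/forallP => i; rewrite !shiftE lerD2r; exact: h.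
Qed.

Theorem mainTheorem7 (K : fieldType) (R : realType) (n : nat)
    (G : grid R n) (delta : R) (P : pres K R n) :
  0 <= delta -> lt_half_c G delta -> valid_pres P ->
  (dI (coker (merge_pres G delta P)) (coker P) <= delta%:E)%E.
Proof.
move=> d0 _ vP.
set P' := merge_pres G delta P.
have vP' : valid_pres P'.
  move=> j i nz; exact: merge_mono (vP j i nz).
have FF : forall (Q : pres K R n) a b, lev a b -> (pres_F0 Q a <= pres_F0 Q b)%MS.
  move=> Q a b ab; apply: (@F0g_sub K R n _ (@pgen _ _ _ Q) (@pgen _ _ _ Q)) => i h.
  exact: lev_trans h ab.
have II : forall (Q : pres K R n) a b, lev a b -> (pres_Im Q a <= pres_Im Q b)%MS.
  move=> Q a b ab; apply: (@Img_sub K R n _ _ (@prel _ _ _ Q) (@prel _ _ _ Q)) => j h.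
  exact: lev_trans h ab.
have IF : forall (Q : pres K R n) a, valid_pres Q -> (pres_Im Q a <= pres_F0 Q a)%MS.
  move=> Q a vQ; exact: (@Img_F0 K R n _ _ (@prel _ _ _ Q) (@pgen _ _ _ Q)).
have F1 : forall a, (pres_F0 P' a <= pres_F0 P (shift a delta))%MS.
  move=> a; apply: (@F0g_sub K R n _ (@pgen _ _ _ P') (@pgen _ _ _ P)) => i h.
  exact: merge_lev1 h.
have F2 : forall a, (pres_F0 P a <= pres_F0 P' (shift a delta))%MS.
  move=> a; apply: (@F0g_sub K R n _ (@pgen _ _ _ P) (@pgen _ _ _ P')) => i h.
  exact: merge_lev2 h.
have I1 : forall a, (pres_Im P' a <= pres_Im P (shift a delta))%MS.
  move=> a; apply: (@Img_sub K R n _ _ (@prel _ _ _ P') (@prel _ _ _ P)) => j h.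
  exact: merge_lev1 h.
have I2 : forall a, (pres_Im P a <= pres_Im P' (shift a delta))%MS.
  move=> a; apply: (@Img_sub K R n _ _ (@prel _ _ _ P) (@prel _ _ _ P')) => j h.
  exact: merge_lev2 h.
have Hint : interleaved (coker P') (coker P) delta.
  exists (fun a => sqmap (pres_F0 P' a) (pres_Im P' a)
                     (pres_F0 P (shift a delta)) (pres_Im P (shift a delta))).
  exists (fun a => sqmap (pres_F0 P a) (pres_Im P a)
                     (pres_F0 P' (shift a delta)) (pres_Im P' (shift a delta))).
  split.
  - move=> a b ab.
    transitivity (sqmap (pres_F0 P' a) (pres_Im P' a)
                     (pres_F0 P (shift b delta)) (pres_Im P (shift b delta))).
      by apply: sqmap_comp; [exact: FF | exact: IF | exact: I1].
    symmetry; apply: sqmap_comp; [exact: F1 | exact: IF | exact: II (lev_shift _ ab)].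
  - move=> a b ab.
    transitivity (sqmap (pres_F0 P a) (pres_Im P a)
                     (pres_F0 P' (shift b delta)) (pres_Im P' (shift b delta))).
      by apply: sqmap_comp; [exact: FF | exact: IF | exact: I2].
    symmetry; apply: sqmap_comp; [exact: F2 | exact: IF | exact: II (lev_shift _ ab)].
  - move=> a.
    by apply: sqmap_comp; [exact: F1 | exact: IF | exact: I2].
  - move=> a.
    by apply: sqmap_comp; [exact: F2 | exact: IF | exact: I1].
apply: ereal_inf_lbound; exists delta => //.
Qed.
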